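(* Let $k=2m+1$, $l=2n+1$ be odd integers and let $U(k,l)\subset\mathbb C^3(u,v,z)$ be the vanishing set of $S_n(t)S_{m-1}(z)-S_{n-1}(t)S_m(z)$ where $t=uv-z\big(S_m^2(z)+S_{m-1}^2(z)\big)+4S_m(z)S_{m-1}(z)$. Then on $U(k,l)$, $v=0$ only for a set of dimension zero.
   Context: The Chebyshev polynomials $S_j(\omega)$ are defined for all integers $j$ by $S_0=1$, $S_1=\omega$, $S_{j+1}=\omega S_j-S_{j-1}$.
   Formalization: Only finitely many z occur among the points (u,0,z) of U(k,l), rather than {v=0} ∩ U(k,l) having dimension zero, and (k,l) differs from (1,1) and (−1,−1). The statement above fails without it. *)

(* Defs.v *)
From mathcomp Require Import all_boot all_order all_algebra.
Set Implicit Arguments. Unset Strict Implicit. Unset Printing Implicit Defensive.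
Import Order.TTheory GRing.Theory Num.Theory.
Local Open Scope ring_scope.

Fixpoint chebS_nat (R : nzRingType) (j : nat) : {poly R} :=
  match j with
  | 0%N => 1
  | 1%N => 'X
  | (j'.+1 as j1).+1 => 'X * chebS_nat R j1 - chebS_nat R j'
  end.

(* Extension to all integers j compatible with S_{j+1} = X S_j - S_{j-1}:
   S_{-1} = 0 and S_{-j-2} = - S_j for j >= 0. *)
Definition chebS (R : nzRingType) (j : int) : {poly R} :=
  match j with
  | Posz n => chebS_nat R n
  | Negz 0 => 0
  | Negz n.+1 => - chebS_nat R n
  end.

Definition S (R : nzRingType) (j : int) (w : R) : R := (chebS R j).[w].

Definition tUV (R : nzRingType) (m : int) (u v z : R) : R :=
  u * v - z * (S m z ^+ 2 + S (m - 1) z ^+ 2) + 4 * S m z * S (m - 1) z.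

Definition Ukl_poly (R : nzRingType) (m n : int) (u v z : R) : R :=
  let t := tUV m u v z in
  S n t * S (m - 1) z - S (n - 1) t * S m z.

Definition inU (R : nzRingType) (m n : int) (u v z : R) : Prop :=
  Ukl_poly m n u v z = 0.

(* Main.v *)
Require Import Defs.
From mathcomp Require Import all_boot all_order all_algebra zify ring.
Import GRing.Theory Num.Theory.
Local Open Scope ring_scope.

Definition A (F : idomainType) (k : nat) : {poly F} := chebS_nat F k.
Definition Am1 (F : idomainType) (k : nat) : {poly F} :=
  if k is p.+1 then A F p else 0.

Lemma szA (F : idomainType) k : size (A F k) = k.+1.
Proof.
suff H : forall i, size (A F i) = i.+1 /\ size (A F i.+1) = i.+2 by case: (H k).
elim=> [|i [H1 H2]].
  by rewrite /A /= size_polyX size_poly1.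
split=> //.
have -> : A F i.+2 = 'X * A F i.+1 - A F i by [].
have HX : size ('X * A F i.+1) = i.+3.
  rewrite mulrC size_mulX ?H2 // -size_poly_eq0 H2 //.
by rewrite size_polyDl HX // size_polyN H1.
Qed.

Lemma A_neq0 (F : idomainType) k : A F k != 0.
Proof. by rewrite -size_poly_eq0 szA. Qed.

Lemma szAm1 (F : idomainType) k : size (Am1 F k) = k.
Proof. by case: k => [|k] /=; rewrite ?size_poly0 ?szA. Qed.

Definition Tp {F : idomainType} (a b : {poly F}) : {poly F} :=
  - ('X * (a ^+ 2 + b ^+ 2)) + 4 * a * b.

Lemma szT (F : idomainType) j : size (Tp (A F j) (Am1 F j)) = (2 * j + 2)%N.
Proof.
have hA2 : size (A F j ^+ 2) = (2 * j + 1)%N.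
  by rewrite expr2 size_mul ?A_neq0 // szA; lia.
have hB2 : (size (Am1 F j ^+ 2) < 2 * j + 1)%N.
  case: j hA2 => [|j] hA2 /=; first by rewrite expr2 mul0r size_poly0.
  by rewrite expr2 size_mul ?A_neq0 // szA; lia.
have hS : size (A F j ^+ 2 + Am1 F j ^+ 2) = (2 * j + 1)%N.
  by rewrite size_polyDl hA2.
have hS0 : A F j ^+ 2 + Am1 F j ^+ 2 != 0 by rewrite -size_poly_eq0 hS; lia.
have hX : size (- ('X * (A F j ^+ 2 + Am1 F j ^+ 2))) = (2 * j + 2)%N.
  by rewrite size_polyN mulrC size_mulX // hS; lia.
rewrite /Tp size_polyDl hX //.
have h4 : (size (4%R : {poly F}) <= 1)%N.
  by rewrite -[4 : {poly F}]/(4%:R) -polyC_natr size_polyC_leq1.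
apply: (leq_ltn_trans (size_polyMleq _ _)).
have := @size_polyMleq _ (4%R : {poly F}) (A F j); rewrite szA szAm1 => h.
lia.
Qed.

Lemma cA_size (F : idomainType) (k j : nat) :
  size (A F k \Po Tp (A F j) (Am1 F j)) = (k * (2 * j + 1) + 1)%N.
Proof.
have hT := szT F j.
have hn : A F k \Po Tp (A F j) (Am1 F j) != 0.
  rewrite -lead_coef_eq0 lead_coef_comp ?hT; last lia.
  rewrite mulf_eq0 negb_or lead_coef_eq0 A_neq0 /= expf_eq0 lead_coef_eq0.
  by rewrite -size_poly_eq0 hT addn2 andbF.
have := @size_comp_poly F (A F k) (Tp (A F j) (Am1 F j)).
rewrite hT szA.
move: hn; rewrite -size_poly_eq0.
case: (size _) => // s _ /= ->. lia.
Qed.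

Lemma comp_polyN' (F : idomainType) (p q : {poly F}) : (- p) \Po q = - (p \Po q).
Proof. exact: raddfN. Qed.

Lemma neqszD (F : idomainType) (x y : {poly F}) : size x != size y -> x + y != 0.
Proof. by apply: contra; rewrite addr_eq0 => /eqP ->; rewrite size_polyN. Qed.

Lemma neqsz (F : idomainType) (x y : {poly F}) : size x != size y -> x - y != 0.
Proof. by apply: contra; rewrite subr_eq0 => /eqP ->. Qed.

Section Main.
Variable F : idomainType.
Variable j : nat.
Let T := Tp (A F j) (Am1 F j).
Let K := (2 * j + 1)%N.

Lemma cA_neq0 k : A F k \Po T != 0.
Proof. by rewrite -size_poly_eq0 cA_size addn1. Qed.

Lemma szcA k : size (A F k \Po T) = (k * K + 1)%N.
Proof. exact: cA_size. Qed.

Lemma szprod k l : size ((A F k \Po T) * A F l) = (k * K + 1 + l)%N.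
Proof. by rewrite size_mul ?cA_neq0 ?A_neq0 // szcA szA addnS. Qed.

End Main.

Lemma Am1S (F : idomainType) k : Am1 F k.+1 = A F k. Proof. by []. Qed.
Lemma Am10 (F : idomainType) : Am1 F 0 = 0. Proof. by []. Qed.

Ltac simpc := rewrite ?Am1S ?Am10 ?comp_polyN' ?comp_poly0 ?mulNr ?mulrN ?opprK
   ?mul0r ?mulr0 ?oppr0 ?subr0 ?sub0r ?addr0 ?add0r ?oppr_eq0.

Lemma PP (F : idomainType) i j : ~ (i = 0%N /\ j = 0%N) ->
  (A F i \Po Tp (A F j) (Am1 F j)) * Am1 F j - (Am1 F i \Po Tp (A F j) (Am1 F j)) * A F j != 0.
Proof.
case: i => [|p]; case: j => [|q] H; first (by exfalso; exact: H); simpc;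
  try by rewrite mulf_neq0 ?cA_neq0 ?A_neq0.
apply: neqszD; rewrite ?size_polyN !szprod; nia.
Qed.

Lemma NP (F : idomainType) i j :
  (A F i \Po Tp (A F j) (Am1 F j)) * (- A F j) - (Am1 F i \Po Tp (A F j) (Am1 F j)) * (- Am1 F j) != 0.
Proof.
case: i => [|p]; case: j => [|q]; simpc;
  try by rewrite mulf_neq0 ?cA_neq0 ?A_neq0.
apply: neqszD; rewrite ?size_polyN !szprod; nia.
Qed.

Lemma PN (F : idomainType) i j :
  ((- Am1 F i) \Po Tp (A F j) (Am1 F j)) * Am1 F j - ((- A F i) \Po Tp (A F j) (Am1 F j)) * A F j != 0.
Proof.
case: i => [|p]; case: j => [|q]; simpc;
  try by rewrite mulf_neq0 ?cA_neq0 ?A_neq0.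
apply: neqszD; rewrite ?size_polyN !szprod; nia.
Qed.

Lemma NN (F : idomainType) i j : ~ (i = 0%N /\ j = 0%N) ->
  ((- Am1 F i) \Po Tp (A F j) (Am1 F j)) * (- A F j) - ((- A F i) \Po Tp (A F j) (Am1 F j)) * (- Am1 F j) != 0.
Proof.
case: i => [|p]; case: j => [|q] H; first (by exfalso; exact: H); simpc;
  try by rewrite mulf_neq0 ?cA_neq0 ?A_neq0.
apply: neqszD; rewrite ?size_polyN !szprod; nia.
Qed.

Lemma chebPos (F : idomainType) j : chebS F (Posz j) = A F j. Proof. by []. Qed.
Lemma chebPos1 (F : idomainType) j : chebS F (Posz j - 1) = Am1 F j.
Proof. case: j => [|j] //. have -> : (Posz j.+1 - 1 = Posz j)%R by lia. by []. Qed.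
Lemma chebNeg (F : idomainType) j : chebS F (Negz j) = - Am1 F j.
Proof. by case: j => [|j] /=; rewrite ?oppr0. Qed.
Lemma chebNeg1 (F : idomainType) j : chebS F (Negz j - 1) = - A F j.
Proof. have -> : (Negz j - 1 = Negz j.+1)%R by rewrite !NegzE; lia. by []. Qed.
Lemma TpNN (F : idomainType) (a b : {poly F}) : Tp (- b) (- a) = Tp a b.
Proof. rewrite /Tp; ring. Qed.

Theorem lemma4p6 (C : numClosedFieldType) (m n : int)
  (hnondeg : ~ ((m = 0 /\ n = 0) \/ (m = -1 /\ n = -1))) :
  exists s : seq C, forall u z : C, inU m n u 0 z -> z \in s.
Proof.
have HP : (chebS C n \Po Tp (chebS C m) (chebS C (m - 1))) * chebS C (m - 1)
   - (chebS C (n - 1) \Po Tp (chebS C m) (chebS C (m - 1))) * chebS C m != 0.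
  case: m hnondeg => j; case: n => i hnd.
  - rewrite !chebPos1 !chebPos; apply: PP => -[Hi Hj]; apply: hnd; left; by rewrite Hi Hj.
  - rewrite !chebPos !chebPos1 !chebNeg1 !chebNeg; exact: PN.
  - rewrite !chebPos1 !chebPos !chebNeg1 !chebNeg TpNN; exact: NP.
  - rewrite !chebNeg1 !chebNeg TpNN; apply: NN => -[Hi Hj]; apply: hnd; right; by rewrite Hi Hj.
set a := chebS C m in HP *; set b := chebS C (m - 1) in HP *.
set c := chebS C n in HP *; set d := chebS C (n - 1) in HP *.
set P := (c \Po Tp a b) * b - (d \Po Tp a b) * a in HP *.
have Hroot : forall u z, inU m n u 0 z -> root P z.
  move=> u z; rewrite /inU /Ukl_poly /tUV /S => H.
  apply/eqP; rewrite /P /Tp !hornerE !horner_comp !hornerE -/a -/b -/c -/d.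
  rewrite -H mulr0 add0r.
  congr (_.[_] * _ - _.[_] * _); congr (- _ + _ * _ * _); change (1 + 1 + 1 + 1 = 4 :> C); ring.
have [r Hr] := closed_field_poly_normal P.
exists r => u z /Hroot.
rewrite Hr rootZ ?root_prod_XsubC // lead_coef_eq0 //.
Qed.
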